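(* Let $S\subset\mathbb{Z}_{>0}^3$ be the union, up to permutation of coordinates, of the following sets: (1) the set $\mathcal{A}$ of all well-formed triples $(a,b,c)$ for which $\mathbb{P}(a,b,c)$ contains a Du Val singularity or a smooth torus-invariant point; (2) $\mathcal{B}_1=\{(1+4\ell(n-1),\,2n-1+4k(n-1),\,4n-4): n\geq2,\ 0\leq\ell,k<n-1\}$; (3) $\mathcal{B}_2=\{(1+\ell(6n-5),\,3n-1+k(6n-5),\,6n-5): n\geq2,\ 0\leq\ell,k<\lceil\frac{4(6n-5)}{9}\rceil\}$; (4) $\mathcal{B}_3=\{(1+\ell(6n-7),\,3n-2+k(6n-7),\,6n-7): n\geq2,\ 0\leq\ell,k<\lceil\frac{4(6n-7)}{9}\rceil\}$. Then $S$ has density zero in $\mathbb{Z}_{>0}^3$, i.e. $\lim_{N\to\infty}\#(S\cap[1,N]^3)/N^3=0$.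
   Context: A triple $(a,b,c)$ is well-formed if its entries are pairwise coprime. The torus-invariant points of $\mathbb{P}(a,b,c)$ are the cyclic quotient points $\frac1a(b,c)$, $\frac1b(a,c)$, $\frac1c(a,b)$. *)

(* Defs.v *)
From mathcomp Require Import all_boot all_order all_algebra.
From mathcomp Require Import all_classical all_reals all_analysis.
Set Implicit Arguments. Unset Strict Implicit. Unset Printing Implicit Defensive.

Definition well_formed (a b c : nat) : bool :=
  [&& 0 < a, 0 < b, 0 < c, coprime a b, coprime a c & coprime b c].

(* The cyclic quotient point 1/r(u,v) (with u, v coprime to r) is smooth
   iff r = 1. *)
Definition cq_smooth (r u v : nat) : bool := r == 1.

(* The cyclic quotient surface singularity 1/r(u,v), r > 1, u,v coprime
   to r, is Du Val iff it is an A_{r-1} singularity iff r | u + v. *)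
Definition cq_DuVal (r u v : nat) : bool := (1 < r) && (r %| u + v).

(* Torus-invariant points of P(a,b,c): 1/a(b,c), 1/b(a,c), 1/c(a,b). *)
Definition tinv_pt_ok (r u v : nat) : bool := cq_smooth r u v || cq_DuVal r u v.

Definition inA (a b c : nat) : bool :=
  well_formed a b c &&
  [|| tinv_pt_ok a b c, tinv_pt_ok b a c | tinv_pt_ok c a b].

Definition ceil_div (p q : nat) : nat := (p + q - 1) %/ q.

(* B1 = {(1+4l(n-1), 2n-1+4k(n-1), 4n-4) : n >= 2, 0 <= l,k < n-1}.
   The bounds on the witnesses are harmless: n <= z, l <= x, k <= y. *)
Definition inB1 (x y z : nat) : bool :=
  [exists n : 'I_z.+1, exists l : 'I_x.+1, exists k : 'I_y.+1,
    [&& 2 <= n, l < n - 1, k < n - 1,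
        x == 1 + 4 * l * (n - 1),
        y == 2 * n - 1 + 4 * k * (n - 1) &
        z == 4 * n - 4]].

Definition inB2 (x y z : nat) : bool :=
  [exists n : 'I_z.+1, exists l : 'I_x.+1, exists k : 'I_y.+1,
    [&& 2 <= n, l < ceil_div (4 * (6 * n - 5)) 9, k < ceil_div (4 * (6 * n - 5)) 9,
        x == 1 + l * (6 * n - 5),
        y == 3 * n - 1 + k * (6 * n - 5) &
        z == 6 * n - 5]].

Definition inB3 (x y z : nat) : bool :=
  [exists n : 'I_z.+1, exists l : 'I_x.+1, exists k : 'I_y.+1,
    [&& 2 <= n, l < ceil_div (4 * (6 * n - 7)) 9, k < ceil_div (4 * (6 * n - 7)) 9,
        x == 1 + l * (6 * n - 7),
        y == 3 * n - 2 + k * (6 * n - 7) &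
        z == 6 * n - 7]].

Definition inBase (x y z : nat) : bool :=
  [|| inA x y z, inB1 x y z, inB2 x y z | inB3 x y z].

Definition inS (x y z : nat) : bool :=
  [|| inBase x y z, inBase x z y, inBase y x z,
      inBase y z x, inBase z x y | inBase z y x].

Definition countS (N : nat) : nat :=
  \sum_(1 <= x < N.+1) \sum_(1 <= y < N.+1) \sum_(1 <= z < N.+1) inS x y z.

(* Main.v *)
Require Import Defs.
From mathcomp Require Import all_boot all_order all_algebra.
From mathcomp Require Import all_classical all_reals all_analysis.
From mathcomp Require Import zify.

Definition Sum3 (N : nat) (F : nat -> nat -> nat -> nat) : nat :=
  \sum_(1 <= x < N.+1) \sum_(1 <= y < N.+1) \sum_(1 <= z < N.+1) F x y z.

Lemma win (b t K n : nat) : 0 < b -> n <= b ->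
  \sum_(K <= c < K + n) (b %| c + t) <= 1.
Proof.
move=> b0; elim: n => [|n IH] Hn; first by rewrite addn0 big_geq.
rewrite addnS big_nat_recr /=; last by lia.
case: (boolP (b %| K + n + t)) => Hd /=; last by rewrite addn0 IH // ltnW.
rewrite big_nat_cond big1 // => c /andP[/andP[Kc cKn] _].
case: (boolP (b %| c + t)) => // Hc.
have := dvdn_sub Hd Hc.
have -> : K + n + t - (c + t) = K + n - c by lia.
move/(dvdn_leq); have h : 0 < K + n - c by lia.
move/(_ h); lia.
Qed.

Lemma mwin (b t m : nat) : 0 < b -> \sum_(0 <= c < m * b) (b %| c + t) <= m.
Proof.
move=> b0; elim: m => [|m IH]; first by rewrite mul0n big_geq.
rewrite mulSnr (@big_cat_nat _ _ _ (m * b)) //=; last by lia.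
by rewrite -addn1 leq_add // win.
Qed.

Lemma cnt (P : pred nat) b t N : 0 < b -> (forall c, P c -> b %| c + t) ->
  b * \sum_(1 <= c < N.+1) P c <= N + b.
Proof.
move=> b0 HP.
have h1 : \sum_(1 <= c < N.+1) P c <= \sum_(1 <= c < N.+1) (b %| c + t).
  apply: leq_sum => c _; by case: (boolP (P c)) => // /HP ->.
  
have h2 : \sum_(1 <= c < N.+1) (b %| c + t) <= \sum_(0 <= c < (N %/ b).+1 * b) (b %| c + t).
  rewrite (@big_cat_nat _ _ _ N.+1 0) //=; last by apply: ltn_ceil.
  rewrite (@big_cat_nat _ _ _ 1 0 N.+1) //=.
  lia.
have h3 := @mwin b t (N %/ b).+1 b0.
have h4 := leq_trunc_div N b.
have := leq_trans h1 (leq_trans h2 h3).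
move=> h5; have := leq_mul (leqnn b) h5. nia.
Qed.

Lemma cntle N M : \sum_(1 <= b < N.+1) (b <= M) <= minn N M.
Proof.
elim: N => [|N IH]; first by rewrite big_geq.
rewrite big_nat_recr //=. case: (leqP N.+1 M) => h /=; lia.
Qed.

Lemma core N M (P : nat -> nat -> nat -> bool) (t : nat -> nat -> nat) : 0 < M ->
  (forall a b c, 0 < b -> P a b c -> b %| c + t a b) ->
  M * Sum3 N (fun a b c => P a b c) <= M * M * N * N + 2 * N * N * N.
Proof.
move=> M0 HP; rewrite /Sum3 big_distrr /=.
apply: (@leq_trans (\sum_(1 <= a < N.+1) (M * M * N + 2 * N * N))); last first.
  by rewrite sum_nat_const_nat subn1 /=; nia.
apply: leq_sum => a _; rewrite big_distrr /=.
apply: (@leq_trans (\sum_(1 <= b < N.+1) (M * N * (b <= M) + 2 * N))).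
  rewrite big_nat_cond [X in _ <= X]big_nat_cond.
  apply: leq_sum => b /andP[/andP[b1 bN] _].
  set g := \sum_(1 <= c < N.+1) P a b c.
  have g1 : g <= N.
    apply: (@leq_trans (\sum_(1 <= c < N.+1) 1)).
      by apply: leq_sum => c _; apply: leq_b1.
    by rewrite sum_nat_const_nat subn1 muln1.
  have g2 : b * g <= N + b by apply: (@cnt (P a b) b (t a b) N b1) => c; apply: HP.
  case: (leqP b M) => bM /=; nia.
rewrite big_split /= -big_distrr /= sum_nat_const_nat subn1 /=.
have := cntle N M; nia.
Qed.
Lemma S12 N F : Sum3 N F = Sum3 N (fun a b c => F b a c).
Proof. by rewrite /Sum3 exchange_big. Qed.
Lemma S23 N F : Sum3 N F = Sum3 N (fun a b c => F a c b).
Proof. by rewrite /Sum3; apply: eq_bigr => a _; rewrite exchange_big. Qed.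
Lemma Sum3_le N F G : (forall x y z, F x y z <= G x y z) -> Sum3 N F <= Sum3 N G.
Proof. by move=> H; do 3 (apply: leq_sum => ? _); apply: H. Qed.
Lemma Sum3_add N F G : Sum3 N (fun x y z => F x y z + G x y z) = Sum3 N F + Sum3 N G.
Proof.
rewrite /Sum3 -big_split; apply: eq_bigr => x _; rewrite -big_split.
by apply: eq_bigr => y _; rewrite -big_split.
Qed.

Lemma Pcab N F : Sum3 N F = Sum3 N (fun a b c => F c a b).
Proof. by rewrite S12 S23. Qed.
Lemma Pbca N F : Sum3 N F = Sum3 N (fun a b c => F b c a).
Proof. by rewrite S23 S12. Qed.
Lemma Pacb N F : Sum3 N F = Sum3 N (fun a b c => F a c b).
Proof. exact: S23. Qed.
Lemma Pbac N F : Sum3 N F = Sum3 N (fun a b c => F b a c).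
Proof. exact: S12. Qed.
Lemma Pcba N F : Sum3 N F = Sum3 N (fun a b c => F c b a).
Proof. by rewrite S12 S23 S12. Qed.

Lemma imp_le (b1 b2 : bool) : (b1 -> b2) -> b1 <= b2.
Proof. by case: b1; case: b2 => // /(_ isT). Qed.

Lemma inS_le x y z : inS x y z <= inBase x y z + inBase x z y + inBase y x z
  + inBase y z x + inBase z x y + inBase z y x.
Proof.
rewrite /inS; case: (inBase x y z); case: (inBase x z y); case: (inBase y x z);
case: (inBase y z x); case: (inBase z x y); by case: (inBase z y x).
Qed.

Lemma inA_imp x y z : inA x y z -> [|| x == 1, y == 1, z == 1, x %| y + z, y %| x + z | z %| x + y].
Proof.
rewrite /inA /tinv_pt_ok /cq_smooth /cq_DuVal => /andP[_].
case: (x == 1); case: (y == 1); case: (z == 1); case: (x %| _); case: (y %| _); case: (z %| _);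
by rewrite ?andbF ?orbT ?orbF.
Qed.

Lemma inB_imp x y z : [|| inB1 x y z, inB2 x y z | inB3 x y z] -> z %| x + (z - 1).
Proof.
case/or3P.
- move=> /existsP[n /existsP[l /existsP[k /andP[n2 /and5P[_ _ /eqP hx _ /eqP hz]]]]].
  apply/dvdnP; exists l.+1; nia.
- move=> /existsP[n /existsP[l /existsP[k /andP[n2 /and5P[_ _ /eqP hx _ /eqP hz]]]]].
  apply/dvdnP; exists l.+1; nia.
- move=> /existsP[n /existsP[l /existsP[k /andP[n2 /and5P[_ _ /eqP hx _ /eqP hz]]]]].
  apply/dvdnP; exists l.+1; nia.
Qed.

Lemma or6 (b1 b2 b3 b4 b5 b6 : bool) : [|| b1, b2, b3, b4, b5 | b6] <= b1 + b2 + b3 + b4 + b5 + b6.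
Proof. by case: b1; case: b2; case: b3; case: b4; case: b5; case: b6. Qed.

Lemma inBase_le x y z : inBase x y z <= (x == 1) + (y == 1) + (z == 1)
  + (x %| y + z) + (y %| x + z) + (z %| x + y) + (z %| x + (z - 1)).
Proof.
apply: (@leq_trans ((inA x y z : nat) + ([|| inB1 x y z, inB2 x y z | inB3 x y z] : nat))).
  by rewrite /inBase; case: (inA x y z); case: ([|| inB1 x y z, inB2 x y z | inB3 x y z]).
apply: leq_add; last exact/imp_le/inB_imp.
apply: leq_trans; first exact: imp_le (@inA_imp x y z).
exact: or6.
Qed.

Lemma main_bound N M : 0 < M -> M * countS N <= 42 * (M * M * N * N + 2 * N * N * N).
Proof.
move=> M0.
set B := M * M * N * N + 2 * N * N * N.
have h1 : countS N <= 6 * Sum3 N (fun x y z => inBase x y z).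
  have -> : countS N = Sum3 N (fun x y z => inS x y z) by [].
  apply: leq_trans; first by apply: Sum3_le => x y z; exact: inS_le.
  rewrite !Sum3_add.
  rewrite -(Pacb _ (fun x y z => inBase x y z)) -(Pcab _ (fun x y z => inBase x y z)).
  rewrite -(Pbca _ (fun x y z => inBase x y z)) -(Pbac _ (fun x y z => inBase x y z)).
  rewrite -(Pcba _ (fun x y z => inBase x y z)).
  lia.
have h2 : Sum3 N (fun x y z => inBase x y z) <= Sum3 N (fun x y z => (x == 1) + (y == 1) + (z == 1)
  + (x %| y + z) + (y %| x + z) + (z %| x + y) + (z %| x + (z - 1))).
  by apply: Sum3_le => x y z; exact: inBase_le.
rewrite !Sum3_add in h2.
have q1 : M * Sum3 N (fun x y z => x == 1) <= B.
  rewrite Pcab; apply: (@core N M (fun a b c => c == 1) (fun a b => b - 1)) => // a b c b0 /eqP ->.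
  by rewrite subnKC.
have q2 : M * Sum3 N (fun x y z => y == 1) <= B.
  rewrite Pacb; apply: (@core N M (fun a b c => c == 1) (fun a b => b - 1)) => // a b c b0 /eqP ->.
  by rewrite subnKC.
have q3 : M * Sum3 N (fun x y z => z == 1) <= B.
  apply: (@core N M (fun a b c => c == 1) (fun a b => b - 1)) => // a b c b0 /eqP ->.
  by rewrite subnKC.
have q4 : M * Sum3 N (fun x y z => x %| y + z) <= B.
  by rewrite Pbca; apply: (@core N M (fun a b c => b %| c + a) (fun a b => a)).
have q5 : M * Sum3 N (fun x y z => y %| x + z) <= B.
  apply: (@core N M (fun a b c => b %| a + c) (fun a b => a)) => // a b c _.
  by rewrite addnC.
have q6 : M * Sum3 N (fun x y z => z %| x + y) <= B.
  rewrite Pacb; apply: (@core N M (fun a b c => b %| a + c) (fun a b => a)) => // a b c _.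
  by rewrite addnC.
have q7 : M * Sum3 N (fun x y z => z %| x + (z - 1)) <= B.
  by rewrite Pcab; apply: (@core N M (fun a b c => b %| c + (b - 1)) (fun a b => b - 1)).
have h3 := leq_mul (leqnn M) h2.
have h4 := leq_mul (leqnn M) h1.
rewrite !mulnDr in h3.
lia.
Qed.
From mathcomp Require Import ring lra.
Import Order.TTheory GRing.Theory Num.Theory numFieldNormedType.Exports.
Local Open Scope ring_scope.
Local Open Scope classical_set_scope.

Theorem lemma4p11 (R : realType) :
  ((countS N)%:R / (N ^ 3)%:R : R) @[N --> \oo] --> 0.
Proof.
apply/cvgrPdist_lt => e e0.
pose M := (Num.truncn (168 / e)).+1.
have hM : 168 / e < M%:R by apply: truncnS_gt.
pose K := (Num.truncn (84 * M%:R / e)).+1.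
have hK : 84 * M%:R / e < K%:R by apply: truncnS_gt.
exists K => // N /= KN.
have N0 : (0 < N)%N by apply: leq_trans KN.
have hb := @main_bound N M isT.
rewrite -(ler_nat R) !natrM !natrD !natrM in hb.
rewrite sub0r normrN ger0_norm ?divr_ge0 // ltr_pdivrMr ?ltr0n ?expn_gt0 ?N0 //.
rewrite ltr_pdivrMr // in hM.
rewrite ltr_pdivrMr // in hK.
have hKN : (K%:R <= N%:R :> R) by rewrite ler_nat.
have hN : (0 : R) < N%:R by rewrite ltr0n.
have hM0 : (0 : R) < M%:R by rewrite ltr0n.
rewrite natrX.
set c := (countS N)%:R in hb *.
set m := M%:R in hM hb hK hM0 *.
set n := N%:R in hKN hN hb *.
set k := K%:R in hK hKN.
have hn2 : 0 < m * n ^+ 2 by rewrite mulr_gt0 // exprn_gt0.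
have hn3 : 0 < n ^+ 3 by rewrite exprn_gt0.
have p1 : 42 * m * (m * n ^+ 2) < e * n / 2 * (m * n ^+ 2).
  rewrite ltr_pM2r //; nra.
have p2 : 84 * n ^+ 3 < e * m / 2 * n ^+ 3.
  rewrite ltr_pM2r //; nra.
have : m * c < m * (e * n ^+ 3).
  apply: (le_lt_trans hb).
  have -> : (42 * (m * m * n * n + 2 * n * n * n)) = 42 * m * (m * n ^+ 2) + 84 * n ^+ 3.
    by rewrite !exprS expr0; ring.
  have -> : m * (e * n ^+ 3) = e * n / 2 * (m * n ^+ 2) + e * m / 2 * n ^+ 3.
    by rewrite !exprS expr0; field.
  by rewrite ltrD.
by rewrite ltr_pM2l.
Qed.
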